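(* For every positive integer $\nu$ there exists a sequence $v_0,v_1,\dots,v_{\nu^2}$ of length $\nu^2+1$ taking values in a set of $\nu$ symbols and having the isolated equality property: for all distinct indices $i,j$ with $v_i=v_j$, we have $v_{i+1}\ne v_{j+1}$ whenever both are defined, and $v_{i-1}\neq v_{j-1}$ whenever both are defined. *)

(* Defs.v *)
From mathcomp Require Import all_boot.
Set Implicit Arguments. Unset Strict Implicit. Unset Printing Implicit Defensive.

(* A sequence v_0, ..., v_N is represented by v : nat -> T, only indices
   0..N being relevant. *)
Definition isolated_equality (T : Type) (N : nat) (v : nat -> T) : Prop :=
  forall i j, i <= N -> j <= N -> i <> j -> v i = v j ->
    (i < N -> j < N -> v i.+1 <> v j.+1) /\
    (0 < i -> 0 < j -> v i.-1 <> v j.-1).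

(* Main.v *)
Require Import Defs.
From mathcomp Require Import all_boot.
From mathcomp Require Import zify.

Fixpoint pairs (s : seq nat) : seq (nat * nat) :=
  match s with
  | x :: ((y :: _) as t) => (x, y) :: pairs t
  | _ => [::]
  end.

Lemma size_pairs s : size (pairs s) = (size s).-1.
Proof. elim: s => [|x [|y t] IH] //=; by rewrite IH. Qed.

Lemma nth_pairs s i : i.+1 < size s -> nth (0,0) (pairs s) i = (nth 0 s i, nth 0 s i.+1).
Proof.
elim: s i => [|x [|y t] IH] [|i] //= H.
by rewrite IH.
Qed.

Lemma pairs_cat s x t : pairs (rcons s x ++ t) = pairs (rcons s x) ++ pairs (x :: t).
Proof.
elim: s => [|a s IH] /=; first by case: t.
by rewrite IH; case: s {IH}.
Qed.

Definition mid (k : nat) (r : seq nat) : seq nat := flatten [seq [:: j; k] | j <- r].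
Definition F (k : nat) (r : seq nat) : seq (nat * nat) := flatten [seq [:: (k, j); (j, k)] | j <- r].

Lemma pairs_mid k r x : pairs (k :: mid k r ++ [:: x]) = F k r ++ [:: (k, x)].
Proof. elim: r => [|j r IH] //=. move: IH; rewrite /mid /F /= => ->. by []. Qed.

Lemma memF K r p : p \in F K r -> ((p.1 == K) && (p.2 \in r)) || ((p.2 == K) && (p.1 \in r)).
Proof.
elim: r => [|j r IH] //=.
rewrite !inE => /orP [/eqP -> | /orP [/eqP -> | /IH]] /=; rewrite ?eqxx ?orbT //.
by case/orP => /andP [-> ->]; rewrite ?orbT.
Qed.

Lemma uniqF K r : uniq r -> K \notin r -> uniq (F K r).
Proof.
elim: r => [|j r IH] //= /andP [jr ur]; rewrite inE negb_or => /andP [Kj Kr].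
rewrite /F /= -/(F K r) IH // andbT inE negb_or.
have nKj : (K == j) = false by apply/negbTE.
have njr : (j \in r) = false by apply/negbTE.
rewrite xpair_eqE nKj /=.
apply/andP; split; apply/negP => /memF /=; rewrite ?eqxx ?nKj ?njr /=;
  by rewrite ?andbF ?orbF ?(eq_sym j K) ?nKj.
Qed.

Definition block K := K :: K :: mid K (iota 1 K.-1) ++ [:: 0].

Fixpoint G k := match k with 0 => [:: 0; 0] | k'.+1 => G k' ++ block k'.+1 end.

Lemma pairs_block K : pairs (0 :: block K) = (0, K) :: (K, K) :: F K (iota 1 K.-1) ++ [:: (K, 0)].
Proof. by rewrite /block /= -pairs_mid. Qed.

Lemma size_mid K r : size (mid K r) = (size r).*2.
Proof. elim: r => //= j r IH; by rewrite IH. Qed.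

Lemma G_props k :
  [/\ size (G k) = (k.+1 ^ 2).+1, all (fun x => x < k.+1) (G k),
      exists s, G k = rcons s 0,
      uniq (pairs (G k)) & all (fun p => (p.1 <= k) && (p.2 <= k)) (pairs (G k))].
Proof.
elim: k => [|k [Hs Ha [s Hr] Hu Hp]]; first by split => //; exists [:: 0].
have mK: forall x, x \in mid k.+1 (iota 1 k) -> x <= k.+1.
  move=> x; rewrite /mid => /flattenP [l /mapP [j]]; rewrite mem_iota => /andP [_ Hj] ->.
  by rewrite !inE => /orP [] /eqP ->; lia.
split.
- rewrite /= size_cat Hs /block /= size_cat size_mid size_iota /=; lia.
- rewrite /= all_cat; apply/andP; split.
    by apply/allP => x /(allP Ha) /=; lia.
  rewrite /block /= all_cat /= !ltnSn /=; apply/andP; split => //.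
  by apply/allP => x /mK /=; lia.
- exists (G k ++ [:: k.+1, k.+1 & mid k.+1 (iota 1 k)]).
  by rewrite /= /block /= -cats1 -catA.
- rewrite /= Hr pairs_cat -Hr pairs_block cat_uniq Hu andTb.
  apply/andP; split.
    apply/hasPn => p Hin; apply/negP => /(allP Hp) /= H.
    move: Hin; rewrite !inE mem_cat !inE.
    case/orP => [/eqP E|]; first by rewrite E /= in H; lia.
    case/orP => [/eqP E|]; first by rewrite E /= in H; lia.
    case/orP => [/memF|/eqP E]; last by rewrite E /= in H; lia.
    by case/orP => /andP [/eqP E _]; rewrite E in H; lia.
  have nF : forall a b, (a == k.+1) = false -> (b == k.+1) = false -> (a, b) \notin F k.+1 (iota 1 k).
    by move=> a b Ha' Hb; apply/negP => /memF /=; rewrite Ha' Hb.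
  have nK : forall b, b \in iota 1 k -> (b == k.+1) = false.
    by move=> b; rewrite mem_iota => H; apply/negbTE; lia.
  rewrite /= !inE !mem_cat !inE !xpair_eqE /= eqxx /= ?andbT ?andbF /= orbF.
  apply/and3P; split.
  + apply/negP => /memF; rewrite !mem_iota /=; lia.
  + rewrite orbF; apply/negP => /memF; rewrite !mem_iota /=; lia.
  + rewrite cats1 rcons_uniq uniqF ?iota_uniq ?andbT //; last by rewrite mem_iota; lia.
    apply/negP => /memF; rewrite !mem_iota /=; lia.
- rewrite /= Hr pairs_cat -Hr pairs_block all_cat.
  apply/andP; split.
    apply/allP => p /(allP Hp) /=; lia.
  rewrite /= all_cat /= leqnn /=; apply/andP; split; last by [].
  apply/allP => p /memF; rewrite !mem_iota; case: p => a b /=; lia.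
Qed.

Theorem mainTheorem4 (nu : nat) (hnu : 0 < nu) :
  exists v : nat -> 'I_nu, isolated_equality (nu ^ 2) v.
Proof.
case: nu hnu => [|k] // _.
have [Hs Ha _ Hu _] := G_props k.
exists (fun i => inord (nth 0 (G k) i)).
have Hin : forall i, i <= k.+1 ^ 2 -> nth 0 (G k) i < k.+1.
  move=> i Hi; apply: (allP Ha); apply: mem_nth; rewrite Hs; lia.
have Hinj : forall i j, i <= k.+1 ^ 2 -> j <= k.+1 ^ 2 ->
    (inord (nth 0 (G k) i) : 'I_k.+1) = inord (nth 0 (G k) j) -> nth 0 (G k) i = nth 0 (G k) j.
  move=> i j Hi Hj E; have := congr1 (@nat_of_ord _) E; rewrite !inordK //; exact: Hin.
have Hp : forall i j, i < k.+1 ^ 2 -> j < k.+1 ^ 2 -> i <> j ->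
    nth 0 (G k) i = nth 0 (G k) j -> nth 0 (G k) i.+1 <> nth 0 (G k) j.+1.
  move=> i j Hi Hj Hij E E'.
  have : nth (0,0) (pairs (G k)) i = nth (0,0) (pairs (G k)) j.
    by rewrite !nth_pairs ?Hs ?E ?E' //; lia.
  move/eqP; rewrite nth_uniq // ?size_pairs ?Hs //; by move/eqP.
move=> i j Hi Hj Hij E; split.
  move=> Hi' Hj' E'; apply: (Hp i j Hi' Hj' Hij (Hinj _ _ Hi Hj E)).
  by apply: Hinj E'; lia.
move=> Hi0 Hj0 E'.
have Hij' : i.-1 <> j.-1 by lia.
have E1 := Hinj i.-1 j.-1 ltac:(lia) ltac:(lia) E'.
have E2 := Hinj _ _ Hi Hj E.
apply: (Hp i.-1 j.-1 ltac:(lia) ltac:(lia) Hij' E1).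
by rewrite !prednK.
Qed.
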